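(* Every $3$-uniform hypergraph with $7$ vertices and $30$ edges not containing a Fano plane is isomorphic to either $B_7$ or $J_7$.
   Context: Hypergraphs are $3$-uniform; ''containing'' means having a (not necessarily induced) subhypergraph isomorphic to it. The Fano plane is the hypergraph on vertex set $\{1,\dots,7\}$ with edges $123,345,156,147,367,257,246$ (the lines of the projective plane over the field with two elements). $B_7$ is the hypergraph on $7$ vertices with a partition $V=X\cup Y$ into disjoint sets of sizes $3$ and $4$ whose edges are exactly the triples meeting both $X$ and $Y$. $J_7$ is obtained from the complete $3$-uniform hypergraph on $7$ vertices by deleting the five edges containing a fixed pair of vertices. *)

(* Defs.v *)
From mathcomp Require Import all_boot.
Set Implicit Arguments. Unset Strict Implicit. Unset Printing Implicit Defensive.

Definition uniform3 (V : finType) (E : {set {set V}}) : bool :=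
  [forall e in E, #|e| == 3].

Definition contains (V W : finType) (E : {set {set V}}) (H : {set {set W}}) : Prop :=
  exists f : W -> V, injective f /\ forall h, h \in H -> f @: h \in E.

Definition isomorphic (V W : finType) (E : {set {set V}}) (H : {set {set W}}) : Prop :=
  exists f : V -> W, bijective f /\ forall e : {set V}, (e \in E) = (f @: e \in H).

(* Vertices 1..7 of the paper are 0..6 here. *)
Definition tri (a b c : nat) : {set 'I_7} := [set inord a; inord b; inord c].

Definition Fano : {set {set 'I_7}} :=
  [set tri 0 1 2; tri 2 3 4; tri 0 4 5; tri 0 3 6; tri 2 5 6; tri 1 4 6; tri 1 3 5].

Definition B7X : {set 'I_7} := [set i : 'I_7 | (i < 3)%N].
Definition B7 : {set {set 'I_7}} :=
  [set e : {set 'I_7} | [&& #|e| == 3, e :&: B7X != set0 & e :\: B7X != set0]].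

Definition J7 : {set {set 'I_7}} :=
  [set e : {set 'I_7} | (#|e| == 3) && ~~ ([set inord 0; inord 1] \subset e)].

(* Main.v *)
Require Import Defs.
From mathcomp Require Import all_boot zify.
Set Implicit Arguments. Unset Strict Implicit. Unset Printing Implicit Defensive.
Definition fperms : seq (seq nat) := [:: [:: 0; 1; 2; 3; 4; 5; 6];
 [:: 0; 1; 2; 3; 4; 6; 5];
 [:: 0; 1; 2; 3; 5; 4; 6];
 [:: 0; 1; 2; 3; 5; 6; 4];
 [:: 0; 1; 2; 3; 6; 4; 5];
 [:: 0; 1; 2; 3; 6; 5; 4];
 [:: 0; 1; 3; 2; 4; 5; 6];
 [:: 0; 1; 3; 2; 4; 6; 5];
 [:: 0; 1; 3; 2; 5; 4; 6];
 [:: 0; 1; 3; 2; 5; 6; 4];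
 [:: 0; 1; 3; 2; 6; 4; 5];
 [:: 0; 1; 3; 2; 6; 5; 4];
 [:: 0; 1; 4; 2; 3; 5; 6];
 [:: 0; 1; 4; 2; 3; 6; 5];
 [:: 0; 1; 4; 2; 5; 3; 6];
 [:: 0; 1; 4; 2; 5; 6; 3];
 [:: 0; 1; 4; 2; 6; 3; 5];
 [:: 0; 1; 4; 2; 6; 5; 3];
 [:: 0; 1; 5; 2; 3; 4; 6];
 [:: 0; 1; 5; 2; 3; 6; 4];
 [:: 0; 1; 5; 2; 4; 3; 6];
 [:: 0; 1; 5; 2; 4; 6; 3];
 [:: 0; 1; 5; 2; 6; 3; 4];
 [:: 0; 1; 5; 2; 6; 4; 3];
 [:: 0; 1; 6; 2; 3; 4; 5];
 [:: 0; 1; 6; 2; 3; 5; 4];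
 [:: 0; 1; 6; 2; 4; 3; 5];
 [:: 0; 1; 6; 2; 4; 5; 3];
 [:: 0; 1; 6; 2; 5; 3; 4];
 [:: 0; 1; 6; 2; 5; 4; 3]].
Definition cperms : seq (seq nat) := [:: [:: 0; 1; 2; 3; 4; 5; 6];
 [:: 0; 2; 1; 3; 4; 5; 6];
 [:: 0; 2; 3; 1; 4; 5; 6];
 [:: 0; 2; 3; 4; 1; 5; 6];
 [:: 0; 2; 3; 4; 5; 1; 6];
 [:: 0; 2; 3; 4; 5; 6; 1];
 [:: 2; 0; 1; 3; 4; 5; 6];
 [:: 2; 0; 3; 1; 4; 5; 6];
 [:: 2; 0; 3; 4; 1; 5; 6];
 [:: 2; 0; 3; 4; 5; 1; 6];
 [:: 2; 0; 3; 4; 5; 6; 1];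
 [:: 2; 3; 0; 1; 4; 5; 6];
 [:: 2; 3; 0; 4; 1; 5; 6];
 [:: 2; 3; 0; 4; 5; 1; 6];
 [:: 2; 3; 0; 4; 5; 6; 1];
 [:: 2; 3; 4; 0; 1; 5; 6];
 [:: 2; 3; 4; 0; 5; 1; 6];
 [:: 2; 3; 4; 0; 5; 6; 1];
 [:: 2; 3; 4; 5; 0; 1; 6];
 [:: 2; 3; 4; 5; 0; 6; 1];
 [:: 2; 3; 4; 5; 6; 0; 1];
 [:: 3; 4; 5; 6; 0; 1; 2];
 [:: 3; 4; 5; 0; 6; 1; 2];
 [:: 3; 4; 5; 0; 1; 6; 2];
 [:: 3; 4; 5; 0; 1; 2; 6];
 [:: 3; 4; 0; 5; 6; 1; 2];
 [:: 3; 4; 0; 5; 1; 6; 2];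
 [:: 3; 4; 0; 5; 1; 2; 6];
 [:: 3; 4; 0; 1; 5; 6; 2];
 [:: 3; 4; 0; 1; 5; 2; 6];
 [:: 3; 4; 0; 1; 2; 5; 6];
 [:: 3; 0; 4; 5; 6; 1; 2];
 [:: 3; 0; 4; 5; 1; 6; 2];
 [:: 3; 0; 4; 5; 1; 2; 6];
 [:: 3; 0; 4; 1; 5; 6; 2];
 [:: 3; 0; 4; 1; 5; 2; 6];
 [:: 3; 0; 4; 1; 2; 5; 6];
 [:: 3; 0; 1; 4; 5; 6; 2];
 [:: 3; 0; 1; 4; 5; 2; 6];
 [:: 3; 0; 1; 4; 2; 5; 6];
 [:: 3; 0; 1; 2; 4; 5; 6];
 [:: 0; 3; 4; 5; 6; 1; 2];
 [:: 0; 3; 4; 5; 1; 6; 2];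
 [:: 0; 3; 4; 5; 1; 2; 6];
 [:: 0; 3; 4; 1; 5; 6; 2];
 [:: 0; 3; 4; 1; 5; 2; 6];
 [:: 0; 3; 4; 1; 2; 5; 6];
 [:: 0; 3; 1; 4; 5; 6; 2];
 [:: 0; 3; 1; 4; 5; 2; 6];
 [:: 0; 3; 1; 4; 2; 5; 6];
 [:: 0; 3; 1; 2; 4; 5; 6];
 [:: 0; 1; 3; 4; 5; 6; 2];
 [:: 0; 1; 3; 4; 5; 2; 6];
 [:: 0; 1; 3; 4; 2; 5; 6];
 [:: 0; 1; 3; 2; 4; 5; 6];
 [:: 0; 1; 2; 3; 4; 5; 6]].

Definition n7 := iota 0 7.
Fixpoint bseqs n : seq (seq bool) := if n is n'.+1 then [seq b :: s | b <- [:: true; false], s <- bseqs n'] else [:: [::]].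
Definition tripC := filter (fun b => count id b == 3) (bseqs 7).
Definition cI (b1 b2 : seq bool) := count (fun i => nth false b1 i && nth false b2 i) n7.
Definition imgc (s : seq nat) (b : seq bool) := map (fun j => has (fun i => nth false b i && (nth 0 s i == j)) n7) n7.
Definition notJc (b : seq bool) := nth false b 0 && nth false b 1.
Definition notBc (b : seq bool) := ~~ has (nth false b) [:: 0; 1; 2] || ~~ has (nth false b) [:: 3; 4; 5; 6].
Definition tric (a b c : nat) := map (fun i => (i == a) || (i == b) || (i == c)) n7.
Definition FanoC := [:: tric 0 1 2; tric 2 3 4; tric 0 4 5; tric 0 3 6; tric 2 5 6; tric 1 4 6; tric 1 3 5].
Definition FP s := map (imgc s) FanoC.
Definition compatC (a b : seq bool) := (a != b) && (cI a b != 1).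
Definition goodC (ts : seq (seq bool)) :=
  has (fun s => let ims := map (imgc s) ts in
     (all notJc ims && all (fun c => notJc c ==> (c \in ims)) tripC)
  || (all notBc ims && all (fun c => notBc c ==> (c \in ims)) tripC)) cperms.
Fixpoint subs (T : Type) k (L : seq T) : seq (seq T) :=
  match k with 0 => [:: [::]] | k'.+1 =>
    match L with [::] => [::] | x :: L' => map (cons x) (subs k' L') ++ subs k L' end end.
Definition FPL := map FP fperms.
Lemma C1 : (fun F => all (fun b => count (fun P => b \in P) F == 6) tripC) FPL.
Proof. by vm_compute. Qed.
Lemma C2 : (fun F => all (fun b1 => all (fun b2 => (cI b1 b2 == 1) ==> has (fun P => (b1 \in P) && (b2 \in P)) F) tripC) tripC) FPL.
Proof. by vm_compute. Qed.
Lemma C4 : all (fun ts => if pairwise compatC ts then goodC ts else true) (subs 5 tripC).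
Proof. by vm_compute. Qed.
Lemma C3 : all (fun s => [&& uniq s, all (fun k => k < 7) s & size s == 7]) (fperms ++ cperms).
Proof. by vm_compute. Qed.
Lemma C5 : uniq tripC. Proof. by vm_compute. Qed.
Lemma C6 : size fperms = 30. Proof. by vm_compute. Qed.
Lemma C7 : all (fun c => count id c == 3) FanoC. Proof. by vm_compute. Qed.

Definition code (A : {set 'I_7}) : seq bool := map (fun i => inord i \in A) n7.
Definition pf (s : seq nat) (i : 'I_7) : 'I_7 := inord (nth 0 s i).

Lemma nth_code (A : {set 'I_7}) i : i < 7 -> nth false (code A) i = (inord i \in A).
Proof. by move=> hi; rewrite (nth_map 0) ?size_iota // nth_iota. Qed.

Lemma code_inj : injective code.
Proof.
move=> A B h; apply/setP => x.
have := congr1 (fun c => nth false c x) h; by rewrite /= !nth_code // inord_val.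
Qed.

Lemma card_count (A : {set 'I_7}) : #|A| = count (fun i => inord i \in A) n7.
Proof.
rewrite cardE /enum_mem size_filter -enumT /n7 -val_enum_ord count_map.
by apply: eq_count => x /=; rewrite inord_val.
Qed.

Lemma card_code (A : {set 'I_7}) : #|A| = count id (code A).
Proof. by rewrite card_count /code count_map. Qed.

Lemma inord_eq i a : i < 7 -> a < 7 -> ((inord i : 'I_7) == inord a) = (i == a).
Proof.
move=> hi ha; apply/eqP/eqP => [h|->//].
by rewrite -(inordK hi) -(inordK ha) h.
Qed.

Lemma code_tri a b c : a < 7 -> b < 7 -> c < 7 -> code (tri a b c) = tric a b c.
Proof.
move=> ha hb hc; rewrite /code /tric; apply/eq_in_map => i; rewrite mem_iota /= => hi.
by rewrite /tri !inE !inord_eq.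
Qed.

Lemma cI_code (A B : {set 'I_7}) : #|A :&: B| = cI (code A) (code B).
Proof.
rewrite card_count /cI; apply: eq_in_count => i; rewrite mem_iota /= => hi.
by rewrite in_setI !nth_code.
Qed.

Lemma bseqs_all n s : size s = n -> s \in bseqs n.
Proof.
elim: n s => [|n IH] [|b s] //= [hs].
rewrite !mem_cat; case: b; apply/orP; [left|right; apply/orP; left];
  by apply: map_f; apply: IH.
Qed.

Lemma code_trip (A : {set 'I_7}) : #|A| = 3 -> code A \in tripC.
Proof.
move=> h; rewrite mem_filter -card_code h eqxx andTb.
by apply: bseqs_all; rewrite size_map size_iota.
Qed.

Section Perm.
Variable s : seq nat.
Hypothesis hs : [&& uniq s, all (fun k => k < 7) s & size s == 7].

Lemma pf_inj : injective (pf s).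
Proof.
case/and3P: hs => us als /eqP ss x y.
have lt7 : forall z : 'I_7, nth 0 s z < 7.
  by move=> z; apply: (allP als); apply: mem_nth; rewrite ss.
rewrite /pf => /(congr1 (@nat_of_ord 7)); rewrite !inordK ?lt7 // => /eqP.
by rewrite nth_uniq ?ss // => /eqP/val_inj.
Qed.

Lemma code_img (A : {set 'I_7}) : code (pf s @: A) = imgc s (code A).
Proof.
case/and3P: hs => us als /eqP ss.
have lt7 : forall z, z < 7 -> nth 0 s z < 7.
  by move=> z hz; apply: (allP als); apply: mem_nth; rewrite ss.
rewrite {1}/code /imgc; apply/eq_in_map => j; rewrite mem_iota add0n => /andP[_ hj].
apply/imsetP/hasP.
- case=> x xA /(congr1 (@nat_of_ord 7)); rewrite /pf !inordK ?lt7 // => e.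
  exists (nat_of_ord x); first by rewrite mem_iota /=.
  by rewrite nth_code // inord_val xA e eqxx.
- case=> i; rewrite mem_iota /= => hi /andP[]; rewrite nth_code // => iA /eqP e.
  exists (inord i) => //; by rewrite /pf inordK // e.
Qed.
End Perm.

Lemma J7_code (e : {set 'I_7}) : #|e| = 3 -> (e \in J7) = ~~ notJc (code e).
Proof.
by move=> h; rewrite inE h eqxx /= /notJc !nth_code // subUset !sub1set.
Qed.

Lemma B7_code (e : {set 'I_7}) : #|e| = 3 -> (e \in B7) = ~~ notBc (code e).
Proof.
move=> h; rewrite inE h eqxx /= /notBc negb_or !negbK -!cards_eq0 !card_count.
have -> : count (fun i => inord i \in e :&: B7X) n7 = count (fun i => (inord i \in e) && (i < 3)) n7.
  by apply: eq_in_count => i; rewrite mem_iota /= => hi; rewrite !inE inordK.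
have -> : count (fun i => inord i \in e :\: B7X) n7 = count (fun i => (inord i \in e) && ~~ (i < 3)) n7.
  by apply: eq_in_count => i; rewrite mem_iota /= => hi; rewrite !inE inordK // andbC.
rewrite /n7 /=.
by case: (inord 0 \in e); case: (inord 1 \in e); case: (inord 2 \in e); case: (inord 3 \in e);
  case: (inord 4 \in e); case: (inord 5 \in e); case: (inord 6 \in e).
Qed.

Lemma subs_complete (T : eqType) (L s : seq T) : subseq s L -> s \in subs (size s) L.
Proof.
elim: L s => [|y L IH] [|x s] //=.
case: ifP => [/eqP -> /IH h|_ /IH h]; rewrite mem_cat; apply/orP; [left|right] => //.
  exact: map_f.
Qed.

Lemma pairwise_uniq (T : eqType) (r : rel T) (s : seq T) :
  uniq s -> {in s &, forall x y, x != y -> r x y} -> pairwise r s.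
Proof.
elim: s => [|x s IH] //= /andP[xs us] h; apply/andP; split.
  apply/allP => y ys; apply: h; rewrite ?inE ?eqxx ?ys ?orbT //.
  by apply/eqP => exy; move: xs; rewrite exy ys.
apply: IH => // a b ha hb; apply: h; by rewrite inE ?ha ?hb orbT.
Qed.

Lemma sum_ones (I : eqType) (s : seq I) (a : I -> nat) :
  (forall x, x \in s -> 0 < a x) -> \sum_(x <- s) a x = size s ->
  forall x, x \in s -> a x <= 1.
Proof.
elim: s => [|y s IH] //= pos; rewrite big_cons => hs x.
have ge : size s <= \sum_(z <- s) a z.
  rewrite -sum1_size big_seq_cond [X in _ <= X]big_seq_cond.
  by apply: leq_sum => z /andP[zs _]; apply: pos; rewrite inE zs orbT.
have ay : 0 < a y by apply: pos; rewrite inE eqxx.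
rewrite inE => /orP[/eqP ->|xs]; first by move: hs ge ay; clear; lia.
apply: IH => //; first by move=> z zs; apply: pos; rewrite inE zs orbT.
by move: hs ge ay; clear; lia.
Qed.

Definition T3 : {set {set 'I_7}} := [set e : {set 'I_7} | #|e| == 3].

Lemma iso_gen (E K : {set {set 'I_7}}) (nc : pred (seq bool)) (s : seq nat) :
  E \subset T3 -> [&& uniq s, all (fun k => k < 7) s & size s == 7] ->
  (forall e : {set 'I_7}, #|e| = 3 -> (e \in K) = ~~ nc (code e)) ->
  (forall e : {set 'I_7}, e \in K -> #|e| = 3) ->
  all nc (map (imgc s) (map code (enum (T3 :\: E)))) ->
  all (fun c => nc c ==> (c \in map (imgc s) (map code (enum (T3 :\: E))))) tripC ->
  isomorphic E K.
Proof.
move=> ET hs Kc K3 h1 h2.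
have inj := pf_inj hs.
exists (pf s); split; first exact: injF_bij.
move=> e.
have memE : (e \in E) = (e \in T3) && (e \notin T3 :\: E).
  rewrite in_setD negb_and negbK.
  case eE: (e \in E); first by rewrite (subsetP ET e eE).
  by case: (e \in T3).
case: (boolP (#|e| == 3)) => he; last first.
  rewrite memE inE (negbTE he) /=.
  apply/esym/negP => /K3; rewrite card_imset // => h; by rewrite h eqxx in he.
have he' : #|e| = 3 by apply/eqP.
have hi : #|pf s @: e| = 3 by rewrite card_imset.
rewrite memE inE he /= Kc // code_img //.
case eF: (e \in T3 :\: E) => /=.
  suff -> : nc (imgc s (code e)) by [].
  apply: (allP h1); apply: map_f; apply: map_f; by rewrite mem_enum.
apply/esym/negP => ncx.
have : imgc s (code e) \in tripC by rewrite -code_img //; apply: code_trip.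
move/(allP h2); rewrite ncx /= => /mapP[c /mapP[t tF ->]].
rewrite -!code_img // => /(@code_inj _ _) /(@imset_inj _ _ _ inj _ _) et.
by move: eF; rewrite et -mem_enum tF.
Qed.

Lemma main7 (E : {set {set 'I_7}}) :
  uniform3 E -> #|E| = 30 -> ~ contains E Fano -> isomorphic E B7 \/ isomorphic E J7.
Proof.
move=> /forall_inP uE cE nF.
have ET : E \subset T3 by apply/subsetP => e eE; rewrite inE; exact: uE.
have cT : #|T3| = 35 by rewrite card_draws card_ord.
set F := T3 :\: E.
have cF : #|F| = 5 by rewrite cardsDS // cT cE.
have FT : forall t, t \in F -> #|t| = 3 by move=> t; rewrite !inE => /andP[_ /eqP].
pose a s := \sum_(t in F) (code t \in FP s : nat).
have hit : forall s, s \in fperms -> exists2 t, t \in F & code t \in FP s.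
  move=> s sP; have hs : [&& uniq s, all (fun k => k < 7) s & size s == 7] by apply: (allP C3); rewrite mem_cat sP.
  have : ~~ [forall h in Fano, pf s @: h \in E].
    apply/negP => /forall_inP H; apply: nF; exists (pf s); split; [exact: pf_inj | exact: H].
  case/forall_inPn => h hF hE.
  have ch : code h \in FanoC.
    have -> : FanoC = map code [:: tri 0 1 2; tri 2 3 4; tri 0 4 5; tri 0 3 6; tri 2 5 6; tri 1 4 6; tri 1 3 5].
      rewrite [RHS]/map !code_tri //.
    apply/mapP; exists h => //; move: hF; by rewrite /Fano !inE -!orbA.
  exists (pf s @: h); last by rewrite code_img //; apply: map_f.
  rewrite in_setD (negbTE hE) inE card_imset; last exact: pf_inj hs.
  by rewrite card_code /= (allP C7 _ ch).
have pos : forall s, s \in fperms -> 0 < a s.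
  move=> s /hit [t tF q]; rewrite /a (bigD1 t) //= q; by [].
have Hsum : \sum_(s <- fperms) a s = size fperms.
  rewrite /a exchange_big /=.
  rewrite (eq_bigr (fun _ => 6)); first by rewrite sum_nat_const cF.
  move=> t tF; rewrite -(eqP (allP C1 _ (code_trip (FT t tF)))).
  rewrite /FPL count_map -sum1_count big_mkcond /=.
  rewrite [RHS]big_mkcond; apply: eq_bigr => s _; by case: (code t \in FP s).
have le1 := sum_ones pos Hsum.
have compat : forall t1 t2, t1 \in F -> t2 \in F -> t1 != t2 -> #|t1 :&: t2| != 1.
  move=> t1 t2 h1 h2 n12; apply/negP => /eqP i1.
  have C2' : all (fun b1 => all (fun b2 => (cI b1 b2 == 1) ==> has (fun P => (b1 \in P) && (b2 \in P)) FPL) tripC) tripC := C2.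
  have := allP (allP C2' _ (code_trip (FT t1 h1))) _ (code_trip (FT t2 h2)).
  rewrite -cI_code i1 eqxx implyTb => /hasP[P /mapP[s sP ->] /andP[q1 q2]].
  have := le1 s sP; rewrite /a (bigD1 t1) //= (bigD1 t2) /=; last by rewrite h2 eq_sym n12.
  by rewrite q1 q2.
set cs := map code (enum F).
have csT : {subset cs <= tripC}.
  by move=> x /mapP[t]; rewrite mem_enum => tF ->; apply: code_trip; apply: FT.
have ucs : uniq cs by rewrite (map_inj_uniq code_inj) enum_uniq.
set cs' := filter (mem cs) tripC.
have pcs : perm_eq cs' cs.
  apply: uniq_perm => //; first exact: filter_uniq C5.
  by move=> x; rewrite mem_filter; apply/andP/idP => [[]//|xc]; split => //; apply: csT.
have scs : size cs' = 5 by rewrite (perm_size pcs) size_map -cardE cF.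
have := allP C4 cs'.
have -> : cs' \in subs 5 tripC by rewrite -scs; apply: subs_complete; exact: filter_subseq.
move=> /(_ isT).
rewrite ifT; last first.
  apply: pairwise_uniq; first exact: filter_uniq C5.
  move=> x y; rewrite !(perm_mem pcs) => /mapP[t1]; rewrite mem_enum => h1 -> /mapP[t2].
  rewrite mem_enum => h2 -> n12; rewrite /compatC n12 /= -cI_code compat //.
  by apply: contraNneq n12 => ->.
case/hasP => s sC H0.
have /orP H : (all notJc (map (imgc s) cs') && all (fun c => notJc c ==> (c \in map (imgc s) cs')) tripC)
  || (all notBc (map (imgc s) cs') && all (fun c => notBc c ==> (c \in map (imgc s) cs')) tripC) := H0.
have hs : [&& uniq s, all (fun k => k < 7) s & size s == 7] by apply: (allP C3); rewrite mem_cat sC orbT.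
have pm := perm_mem (perm_map (imgc s) pcs).
have K3J : forall e : {set 'I_7}, e \in J7 -> #|e| = 3 by move=> e; rewrite inE => /andP[/eqP].
have K3B : forall e : {set 'I_7}, e \in B7 -> #|e| = 3 by move=> e; rewrite inE => /and3P[/eqP].
case: H => /andP[g1 g2].
  right; apply: (iso_gen ET hs J7_code K3J).
    by rewrite -(perm_all _ (perm_map (imgc s) pcs)).
  by apply/allP => c cTr; have := allP g2 c cTr; rewrite pm.
left; apply: (iso_gen ET hs B7_code K3B).
  by rewrite -(perm_all _ (perm_map (imgc s) pcs)).
by apply/allP => c cTr; have := allP g2 c cTr; rewrite pm.
Qed.

Theorem lemma2p2 (V : finType) (E : {set {set V}}) :
  #|V| = 7 -> uniform3 E -> #|E| = 30 -> ~ contains E Fano ->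
  isomorphic E B7 \/ isomorphic E J7.
Proof.
move=> HV uE cE nF.
pose g (v : V) : 'I_7 := cast_ord HV (enum_rank v).
pose h (i : 'I_7) : V := enum_val (cast_ord (esym HV) i).
have gK : cancel g h by move=> v; rewrite /g /h cast_ordK enum_rankK.
have hK : cancel h g by move=> i; rewrite /g /h enum_valK cast_ordKV.
have ginj := can_inj gK.
pose E' : {set {set 'I_7}} := [set g @: e | e : {set V} in E].
have memE' : forall e : {set V}, (g @: e \in E') = (e \in E) by move=> e; rewrite mem_imset //; exact: imset_inj.
have hgK : forall e : {set V}, h @: (g @: e) = e.
  by move=> e; rewrite -imset_comp (eq_imset _ gK) imset_id.
have uE' : uniform3 E'.
  apply/forall_inP => x /imsetP[e eE ->]; rewrite card_imset //.
  exact: (forall_inP uE).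
have cE' : #|E'| = 30 by rewrite card_imset //; exact: imset_inj.
have nF' : ~ contains E' Fano.
  case=> f [finj fH]; apply: nF; exists (h \o f); split.
    exact: inj_comp (can_inj hK) finj.
  move=> x xF; rewrite imset_comp; case/imsetP: (fH x xF) => e eE ->.
  by rewrite hgK.
have tr : forall K : {set {set 'I_7}}, isomorphic E' K -> isomorphic E K.
  move=> K [f [fb fH]]; exists (f \o g); split.
    apply: bij_comp => //; exact: (Bijective gK hK).
  by move=> e; rewrite imset_comp -fH memE'.
by case: (main7 uE' cE' nF') => /tr; [left|right].
Qed.
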